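(* Let $\mathbf A=(A,\wedge,\vee,\cdot,1,\sim,-)$ be a complete perfect DInFL-algebra. Put $I_1=\{i\in J^\infty(\mathbf A)\mid i\leqslant 1\}$ and, for $a,b,c\in J^\infty(\mathbf A)$, define $a\preccurlyeq b$ iff $b\leqslant a$; $c\in a\circ b$ iff $c\leqslant a\cdot b$; $a^\sim={\sim}\kappa(a)$; and $a^-=-\kappa(a)$. Then $a^\sim,a^-\in J^\infty(\mathbf A)$ for all $a\in J^\infty(\mathbf A)$, and $\mathbf A_+=(J^\infty(\mathbf A),I_1,\preccurlyeq,\circ,{}^\sim,{}^-)$ is a DInFL-frame.
   Context: An InFL-algebra is a structure $(A,\wedge,\vee,\cdot,1,\sim,-)$ with $(A,\wedge,\vee)$ a lattice, $(A,\cdot,1)$ a monoid, and for all $a,b,c$: $a\cdot b\leqslant c\iff a\leqslant -(b\cdot{\sim}c)\iff b\leqslant{\sim}(-c\cdot a)$; a DInFL-algebra is one whose lattice reduct is distributive. $J^\infty(\mathbf A)$ and $M^\infty(\mathbf A)$ denote the completely join-irreducible and completely meet-irreducible elements of the lattice. A lattice is complete perfect if it is complete, every element is the join of the completely join-irreducibles below it, and the meet of the completely meet-irreducibles above it. For $j\in J^\infty(\mathbf A)$, $\kappa(j)=\bigvee\{a\in A\mid j\not\leqslant a\}$. For a set $W$ and $\circ:W\times W\to\mathcal P(W)$, $U\circ V=\bigcup\{a\circ b\mid a\in U,b\in V\}$, $x\circ V=\{x\}\circ V$, $U\circ y=U\circ\{y\}$; $x^{\sim-}$ means $(x^\sim)^-$.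 A DInFL-frame is a tuple $(W,I,\preccurlyeq,\circ,{}^\sim,{}^-)$ with $I\subseteq W$, $\preccurlyeq$ a partial order, $\circ:W\times W\to\mathcal P(W)$, ${}^\sim,{}^-:W\to W$, such that for all $u,v,x,y,z$: (F1) $x\preccurlyeq y$ iff $y\in I\circ x$ iff $y\in x\circ I$; (F2) $x\preccurlyeq y$, $x\in I$ imply $y\in I$; (F3) $x\preccurlyeq y$, $x\in u\circ v$ imply $y\in u\circ v$; (F4) $(x\circ y)\circ z=x\circ(y\circ z)$; (F5) $z^\sim\in x\circ y$ iff $y^-\in z\circ x$; (F6) $x^{\sim-}\preccurlyeq x$ and $x^{-\sim}\preccurlyeq x$. *)

(* Defs.v *)
(* Operations of an InFL-algebra (A, meet, join, mul, one, tl = ~, mi = -). *)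
Record InFL_ops (A : Type) := {
  meet : A -> A -> A;
  join : A -> A -> A;
  mul  : A -> A -> A;
  one  : A;
  tl   : A -> A;
  mi   : A -> A
}.
Arguments meet {A}. Arguments join {A}. Arguments mul {A}.
Arguments one {A}. Arguments tl {A}. Arguments mi {A}.

Definition le {A} (o : InFL_ops A) (a b : A) : Prop := meet o a b = a.

Definition is_lattice {A} (o : InFL_ops A) : Prop :=
  (forall a b c, meet o a (meet o b c) = meet o (meet o a b) c) /\
  (forall a b c, join o a (join o b c) = join o (join o a b) c) /\
  (forall a b, meet o a b = meet o b a) /\
  (forall a b, join o a b = join o b a) /\
  (forall a b, meet o a (join o a b) = a) /\
  (forall a b, join o a (meet o a b) = a).

Definition is_monoid {A} (o : InFL_ops A) : Prop :=
  (forall a b c, mul o a (mul o b c) = mul o (mul o a b) c) /\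
  (forall a, mul o (one o) a = a) /\
  (forall a, mul o a (one o) = a).

Definition is_InFL_algebra {A} (o : InFL_ops A) : Prop :=
  is_lattice o /\ is_monoid o /\
  (forall a b c,
     (le o (mul o a b) c <-> le o a (mi o (mul o b (tl o c)))) /\
     (le o a (mi o (mul o b (tl o c))) <-> le o b (tl o (mul o (mi o c) a)))).

Definition is_DInFL_algebra {A} (o : InFL_ops A) : Prop :=
  is_InFL_algebra o /\
  (forall a b c, meet o a (join o b c) = join o (meet o a b) (meet o a c)).

Definition is_lub {A} (o : InFL_ops A) (S : A -> Prop) (s : A) : Prop :=
  (forall x, S x -> le o x s) /\ (forall u, (forall x, S x -> le o x u) -> le o s u).

Definition is_glb {A} (o : InFL_ops A) (S : A -> Prop) (s : A) : Prop :=
  (forall x, S x -> le o s x) /\ (forall u, (forall x, S x -> le o u x) -> le o u s).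

Definition J_inf {A} (o : InFL_ops A) (j : A) : Prop :=
  forall S : A -> Prop, is_lub o S j -> S j.

Definition M_inf {A} (o : InFL_ops A) (m : A) : Prop :=
  forall S : A -> Prop, is_glb o S m -> S m.

Definition is_complete_with {A} (o : InFL_ops A) (sup : (A -> Prop) -> A) : Prop :=
  forall S, is_lub o S (sup S).

Definition is_perfect {A} (o : InFL_ops A) : Prop :=
  forall a, is_lub o (fun j => J_inf o j /\ le o j a) a /\
            is_glb o (fun m => M_inf o m /\ le o a m) a.

Definition kappa {A} (o : InFL_ops A) (sup : (A -> Prop) -> A) (j : A) : A :=
  sup (fun a => ~ le o j a).

(* DInFL-frame (W, I, prec, circ, ~, -), with W given as a predicate on a
   carrier X; [circ x y z] means z \in x o y.  All axioms relativised to W. *)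
Definition is_DInFL_frame {X} (W I : X -> Prop) (prec : X -> X -> Prop)
  (circ : X -> X -> X -> Prop) (ftl fmi : X -> X) : Prop :=
  (forall x, I x -> W x) /\
  (forall x y z, W x -> W y -> circ x y z -> W z) /\
  (forall x, W x -> W (ftl x)) /\
  (forall x, W x -> W (fmi x)) /\
  (forall x, W x -> prec x x) /\
  (forall x y, W x -> W y -> prec x y -> prec y x -> x = y) /\
  (forall x y z, W x -> W y -> W z -> prec x y -> prec y z -> prec x z) /\
  (forall x y, W x -> W y ->
     (prec x y <-> exists i, I i /\ circ i x y) /\
     ((exists i, I i /\ circ i x y) <-> exists i, I i /\ circ x i y)) /\
  (forall x y, W x -> W y -> prec x y -> I x -> I y) /\
  (forall u v x y, W u -> W v -> W x -> W y -> prec x y -> circ u v x -> circ u v y) /\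
  (forall x y z w, W x -> W y -> W z -> W w ->
     ((exists u, W u /\ circ x y u /\ circ u z w) <->
      (exists v, W v /\ circ y z v /\ circ x v w))) /\
  (forall x y z, W x -> W y -> W z -> (circ x y (ftl z) <-> circ z x (fmi y))) /\
  (forall x, W x -> prec (fmi (ftl x)) x /\ prec (ftl (fmi x)) x).

(* Main.v *)
Require Import Defs.
From Stdlib Require Import Classical.

Lemma meet_idem {A} {o : InFL_ops A} : is_lattice o -> forall a, meet o a a = a.
Proof. intros (mA&jA&mC&jC&ab1&ab2) a.
  rewrite <- (ab2 a a) at 2. apply ab1. Qed.

Lemma le_refl {A} {o : InFL_ops A} : is_lattice o -> forall a, le o a a.
Proof. intros H a. apply (meet_idem H). Qed.

Lemma le_antisym {A} {o : InFL_ops A} : is_lattice o -> forall a b, le o a b -> le o b a -> a = b.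
Proof. intros (mA&jA&mC&jC&ab1&ab2) a b h1 h2. unfold le in *.
  rewrite <- h1, mC. exact h2. Qed.

Lemma le_trans {A} {o : InFL_ops A} : is_lattice o -> forall a b c, le o a b -> le o b c -> le o a c.
Proof. intros (mA&jA&mC&jC&ab1&ab2) a b c h1 h2. unfold le in *.
  rewrite <- h1, <- mA, h2. reflexivity. Qed.

Lemma meet_lb1 {A} {o : InFL_ops A} : is_lattice o -> forall a b, le o (meet o a b) a.
Proof. intros H a b. pose proof (meet_idem H a). destruct H as (mA&jA&mC&jC&ab1&ab2). unfold le.
  rewrite mC, mA, H0. reflexivity. Qed.

Lemma meet_lb2 {A} {o : InFL_ops A} : is_lattice o -> forall a b, le o (meet o a b) b.
Proof. intros H a b. pose proof H as H'. destruct H' as (mA&jA&mC&jC&ab1&ab2).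
  rewrite mC. apply meet_lb1; auto. Qed.

Lemma meet_glb {A} {o : InFL_ops A} : is_lattice o -> forall a b c, le o c a -> le o c b -> le o c (meet o a b).
Proof. intros (mA&jA&mC&jC&ab1&ab2) a b c h1 h2. unfold le in *.
  rewrite mA, h1, h2. reflexivity. Qed.

Lemma le_join {A} {o : InFL_ops A} : is_lattice o -> forall a b, le o a b <-> join o a b = b.
Proof. intros (mA&jA&mC&jC&ab1&ab2) a b. unfold le. split; intro h.
  - rewrite <- h, jC, mC. apply ab2.
  - rewrite <- h. apply ab1. Qed.

Lemma join_ub1 {A} {o : InFL_ops A} : is_lattice o -> forall a b, le o a (join o a b).
Proof. intros (mA&jA&mC&jC&ab1&ab2) a b. apply ab1. Qed.

Lemma join_ub2 {A} {o : InFL_ops A} : is_lattice o -> forall a b, le o b (join o a b).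
Proof. intros H a b. pose proof H as H'. destruct H' as (mA&jA&mC&jC&ab1&ab2).
  rewrite jC. apply join_ub1; auto. Qed.

Lemma join_lub {A} {o : InFL_ops A} : is_lattice o -> forall a b c, le o a c -> le o b c -> le o (join o a b) c.
Proof. intros H a b c h1 h2. apply (le_join H) in h1. apply (le_join H) in h2. apply (le_join H).
  pose proof H as H'. destruct H' as (mA&jA&mC&jC&ab1&ab2).
  rewrite <- jA, h2, h1. reflexivity. Qed.
Lemma mi_tl {A} {o : InFL_ops A} : is_InFL_algebra o -> forall c, mi o (tl o c) = c.
Proof. intros (Hl&(m1&m2&m3)&R) c. apply (le_antisym Hl).
  - pose proof (proj1 (R (mi o (tl o c)) (one o) c)) as h. rewrite m3, m2 in h.
    apply h, le_refl, Hl.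
  - pose proof (proj1 (R c (one o) c)) as h. rewrite m3, m2 in h.
    apply h, le_refl, Hl. Qed.

Lemma tl_mi {A} {o : InFL_ops A} : is_InFL_algebra o -> forall c, tl o (mi o c) = c.
Proof. intros (Hl&(m1&m2&m3)&R) c.
  assert (K : forall b, le o b c <-> le o b (tl o (mi o c))).
  { intro b. pose proof (R (one o) b c) as [h1 h2]. rewrite m2 in h1. rewrite m3 in h2.
    rewrite h1, h2. reflexivity. }
  apply (le_antisym Hl).
  - apply K, le_refl, Hl.
  - apply K, le_refl, Hl. Qed.

Lemma mul_monol {A} {o : InFL_ops A} : is_InFL_algebra o -> forall a a' b,
  le o a a' -> le o (mul o a b) (mul o a' b).
Proof. intros (Hl&M&R) a a' b h. apply (proj2 (proj1 (R _ _ _))).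
  apply (le_trans Hl _ _ _ h). apply (proj1 (proj1 (R _ _ _))). apply le_refl, Hl. Qed.

Lemma mul_monor {A} {o : InFL_ops A} : is_InFL_algebra o -> forall a b b',
  le o b b' -> le o (mul o a b) (mul o a b').
Proof. intros (Hl&M&R) a b b' h. apply (proj2 (proj1 (R _ _ _))).
  apply (proj2 (proj2 (R _ _ _))).
  apply (le_trans Hl _ _ _ h). apply (proj1 (proj2 (R _ _ _))).
  apply (proj1 (proj1 (R _ _ _))). apply le_refl, Hl. Qed.

Lemma tl_anti {A} {o : InFL_ops A} : is_InFL_algebra o -> forall u v,
  le o u v -> le o (tl o v) (tl o u).
Proof. intros HI u v h. pose proof HI as (Hl&(m1&m2&m3)&R).
  assert (K : forall x y, le o (mul o x y) (tl o (one o)) <-> le o y (tl o x)).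
  { intros x y. pose proof (R x y (tl o (one o))) as [h1 h2].
    rewrite (mi_tl HI), m2 in h2. rewrite h1, h2. reflexivity. }
  apply K. apply (le_trans Hl _ (mul o v (tl o v))). apply (mul_monol HI); auto.
  apply K, le_refl, Hl. Qed.

Lemma mi_anti {A} {o : InFL_ops A} : is_InFL_algebra o -> forall u v,
  le o u v -> le o (mi o v) (mi o u).
Proof. intros HI u v h. pose proof HI as (Hl&(m1&m2&m3)&R).
  assert (K : forall x y, le o (mul o x y) (mi o (one o)) <-> le o x (mi o y)).
  { intros x y. pose proof (R x y (mi o (one o))) as [h1 h2].
    rewrite (tl_mi HI), m3 in h1. exact h1. }
  apply K. apply (le_trans Hl _ (mul o (mi o v) v)). apply (mul_monor HI); auto.
  apply K, le_refl, Hl. Qed.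

Lemma tl_iff {A} {o : InFL_ops A} : is_InFL_algebra o -> forall a b,
  le o a b <-> le o (tl o b) (tl o a).
Proof. intros HI a b. split. apply tl_anti; auto.
  intro h. apply (mi_anti HI) in h. rewrite !(mi_tl HI) in h. exact h. Qed.

Lemma mi_iff {A} {o : InFL_ops A} : is_InFL_algebra o -> forall a b,
  le o a b <-> le o (mi o b) (mi o a).
Proof. intros HI a b. split. apply mi_anti; auto.
  intro h. apply (tl_anti HI) in h. rewrite !(tl_mi HI) in h. exact h. Qed.

Lemma le_mi_tl {A} {o : InFL_ops A} : is_InFL_algebra o -> forall a b,
  le o a (mi o b) <-> le o b (tl o a).
Proof. intros HI a b. rewrite (tl_iff HI), (tl_mi HI). reflexivity. Qed.
Definition inf {A} (o : InFL_ops A) (sup : (A -> Prop) -> A) (S : A -> Prop) : A :=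
  sup (fun x => forall y, S y -> le o x y).

Lemma inf_glb {A} {o : InFL_ops A} {sup} : is_complete_with o sup -> forall S, is_glb o S (inf o sup S).
Proof. intros Hc S. unfold inf. split.
  - intros x Sx. apply (proj2 (Hc _)). intros y hy. apply hy, Sx.
  - intros u hu. apply (proj1 (Hc _)). exact hu. Qed.

Lemma le_via_J {A} {o : InFL_ops A} : is_lattice o -> is_perfect o -> forall a b,
  (forall j, J_inf o j -> le o j a -> le o j b) -> le o a b.
Proof. intros Hl Hp a b h. apply (proj2 (proj1 (Hp a))). intros x [Jx hx]. auto. Qed.

Lemma lub_mul_l {A} {o : InFL_ops A} : is_InFL_algebra o -> forall S x b, is_lub o S x ->
  is_lub o (fun z => exists s, S s /\ z = mul o s b) (mul o x b).
Proof. intros HI S x b [h1 h2]. pose proof HI as (Hl&M&R). split.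
  - intros z [s [Ss ->]]. apply (mul_monol HI); auto.
  - intros u hu. apply (proj2 (proj1 (R _ _ _))). apply h2. intros s Ss.
    apply (proj1 (proj1 (R _ _ _))). apply hu. eauto. Qed.

Lemma lub_mul_r {A} {o : InFL_ops A} : is_InFL_algebra o -> forall S x a, is_lub o S x ->
  is_lub o (fun z => exists s, S s /\ z = mul o a s) (mul o a x).
Proof. intros HI S x a [h1 h2]. pose proof HI as (Hl&M&R). split.
  - intros z [s [Ss ->]]. apply (mul_monor HI); auto.
  - intros u hu. apply (proj2 (proj1 (R _ _ _))). apply (proj2 (proj2 (R _ _ _))).
    apply h2. intros s Ss.
    apply (proj1 (proj2 (R _ _ _))). apply (proj1 (proj1 (R _ _ _))). apply hu. eauto. Qed.

Lemma key {A} {o : InFL_ops A} {sup} : is_DInFL_algebra o -> is_complete_with o sup -> is_perfect o ->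
  forall j, J_inf o j -> exists m, M_inf o m /\ ~ le o j m /\ forall a, ~ le o j a -> le o a m.
Proof. intros [HI Hd] Hc Hp j Jj. pose proof HI as (Hl&M&R).
  pose proof Hl as (mA&jA&mC&jC&ab1&ab2).
  set (L := fun x => le o x j /\ x <> j).
  assert (hL := Hc L). set (js := sup L) in *.
  assert (jsj : le o js j). { apply (proj2 hL). intros x [h _]. exact h. }
  assert (jsn : js <> j). { intro E. rewrite E in hL. apply Jj in hL. destruct hL; auto. }
  destruct (classic (exists m, (M_inf o m /\ le o js m) /\ ~ le o j m)) as [[m [[Mm hm] njm]] | NE].
  2:{ exfalso. apply jsn. apply (le_antisym Hl); auto. apply (proj2 (proj2 (Hp js))).
      intros x hx. apply NNPP. intro c. apply NE. eauto. }
  exists m. split; [exact Mm|]. split; [exact njm|].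
  intros a nja.
  assert (hja : le o (meet o j a) m).
  { apply (le_trans Hl _ js); auto. apply (proj1 hL). split. apply meet_lb1; auto.
    intro E. apply nja. rewrite <- E. apply meet_lb2; auto. }
  apply NNPP. intro nam.
  set (U := fun y => le o m y /\ y <> m).
  pose proof (inf_glb Hc U) as hU. set (ms := inf o sup U) in *.
  assert (msn : ms <> m). { intro E. rewrite E in hU. apply Mm in hU. destruct hU; auto. }
  apply msn. apply (le_antisym Hl).
  2:{ apply (proj2 hU). intros x [h _]. exact h. }
  assert (U1 : U (join o m a)). { split. apply join_ub1; auto. intro E.
    apply nam. rewrite <- E. apply join_ub2; auto. }
  assert (U2 : U (join o m j)). { split. apply join_ub1; auto. intro E.
    apply njm. rewrite <- E. apply join_ub2; auto. }
  apply (le_trans Hl _ (meet o (join o m a) (join o m j))).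
  apply meet_glb; auto; apply (proj1 hU); auto.
  rewrite Hd. apply join_lub; auto.
  - apply meet_lb2; auto.
  - rewrite mC, Hd. apply join_lub; auto. apply meet_lb2; auto. Qed.

Lemma kappa_char {A} {o : InFL_ops A} {sup} : is_DInFL_algebra o -> is_complete_with o sup -> is_perfect o ->
  forall j, J_inf o j -> forall a, le o a (kappa o sup j) <-> ~ le o j a.
Proof. intros HD Hc Hp j Jj a. pose proof HD as [(Hl&_) _].
  destruct (key HD Hc Hp j Jj) as [m [Mm [njm hm]]].
  assert (km : le o (kappa o sup j) m). { apply (proj2 (Hc _)). exact hm. }
  split.
  - intros h c. apply njm. apply (le_trans Hl _ _ _ c). apply (le_trans Hl _ _ _ h km).
  - intro h. apply (proj1 (Hc _)). exact h. Qed.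

Lemma kappa_M {A} {o : InFL_ops A} {sup} : is_DInFL_algebra o -> is_complete_with o sup -> is_perfect o ->
  forall j, J_inf o j -> M_inf o (kappa o sup j).
Proof. intros HD Hc Hp j Jj. pose proof HD as [(Hl&_) _].
  destruct (key HD Hc Hp j Jj) as [m [Mm [njm hm]]].
  replace (kappa o sup j) with m; auto. apply (le_antisym Hl).
  - apply (proj1 (Hc _)). exact njm.
  - apply (proj2 (Hc _)). exact hm. Qed.

Lemma join_prime {A} {o : InFL_ops A} {sup} : is_DInFL_algebra o -> is_complete_with o sup -> is_perfect o ->
  forall j, J_inf o j -> forall S x, is_lub o S x -> le o j x -> exists s, S s /\ le o j s.
Proof. intros HD Hc Hp j Jj S x hS hj. pose proof HD as [(Hl&_) _].
  apply NNPP. intro N.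
  assert (le o x (kappa o sup j)).
  { apply (proj2 hS). intros s Ss. apply (kappa_char HD Hc Hp j Jj). eauto. }
  apply ((proj1 (kappa_char HD Hc Hp j Jj x)) H hj). Qed.

Lemma M_to_J {A} {o : InFL_ops A} : is_lattice o -> forall (f g : A -> A),
  (forall u v, le o u v -> le o (f v) (f u)) -> (forall u v, le o u v -> le o (g v) (g u)) ->
  (forall x, g (f x) = x) -> (forall x, f (g x) = x) ->
  forall m, M_inf o m -> J_inf o (f m).
Proof. intros Hl f g fa ga gf fg m Mm S hS.
  set (T := fun y => S (f y)).
  enough (T m) by exact H. apply Mm. split.
  - intros y Ty. rewrite <- (gf m), <- (gf y). apply ga. apply (proj1 hS). exact Ty.
  - intros u hu. rewrite <- (gf u), <- (gf m). apply ga. apply (proj2 hS).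
    intros s Ss. rewrite <- (fg s). apply fa. apply hu. unfold T. rewrite fg. exact Ss. Qed.
Lemma mul_J_l {A} {o : InFL_ops A} {sup} : is_DInFL_algebra o -> is_complete_with o sup -> is_perfect o ->
  forall w a b, J_inf o w -> le o w (mul o a b) -> exists u, J_inf o u /\ le o u a /\ le o w (mul o u b).
Proof. intros HD Hc Hp w a b Jw h. pose proof HD as [HI _].
  destruct (join_prime HD Hc Hp w Jw _ _ (lub_mul_l HI _ _ b (proj1 (Hp a))) h) as [z [[s [[Js hs] ->]] hz]].
  eauto. Qed.

Lemma mul_J_r {A} {o : InFL_ops A} {sup} : is_DInFL_algebra o -> is_complete_with o sup -> is_perfect o ->
  forall w a b, J_inf o w -> le o w (mul o a b) -> exists u, J_inf o u /\ le o u b /\ le o w (mul o a u).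
Proof. intros HD Hc Hp w a b Jw h. pose proof HD as [HI _].
  destruct (join_prime HD Hc Hp w Jw _ _ (lub_mul_r HI _ _ a (proj1 (Hp b))) h) as [z [[s [[Js hs] ->]] hz]].
  eauto. Qed.

Theorem mainTheorem5 (A : Type) (o : InFL_ops A) (sup : (A -> Prop) -> A)
  (HD : is_DInFL_algebra o) (Hc : is_complete_with o sup) (Hp : is_perfect o) :
  (forall a, J_inf o a -> J_inf o (tl o (kappa o sup a)) /\ J_inf o (mi o (kappa o sup a))) /\
  is_DInFL_frame (J_inf o)
    (fun i => J_inf o i /\ le o i (one o))
    (fun a b => le o b a)
    (fun a b c => J_inf o c /\ le o c (mul o a b))
    (fun a => tl o (kappa o sup a))
    (fun a => mi o (kappa o sup a)).
Proof.
  pose proof HD as [HI Hd]. pose proof HI as (Hl&(m1&m2&m3)&R).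
  assert (P1 : forall a, J_inf o a -> J_inf o (tl o (kappa o sup a)) /\ J_inf o (mi o (kappa o sup a))).
  { intros a Ja. pose proof (kappa_M HD Hc Hp a Ja) as Mk. split.
    - apply (M_to_J Hl (tl o) (mi o)); auto. apply tl_anti; auto. apply mi_anti; auto.
      apply mi_tl; auto. apply tl_mi; auto.
    - apply (M_to_J Hl (mi o) (tl o)); auto. apply mi_anti; auto. apply tl_anti; auto.
      apply tl_mi; auto. apply mi_tl; auto. }
  assert (KC := kappa_char HD Hc Hp).
  assert (F1l : forall x y, J_inf o y -> ((exists i, (J_inf o i /\ le o i (one o)) /\ (J_inf o y /\ le o y (mul o i x))) <-> le o y x)).
  { intros x y Jy. split.
    - intros [i [[Ji hi] [_ h]]]. apply (le_trans Hl _ _ _ h). rewrite <- (m2 x) at 2.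
      apply mul_monol; auto.
    - intro h. rewrite <- (m2 x) in h. destruct (mul_J_l HD Hc Hp _ _ _ Jy h) as [u [Ju [hu h']]].
      eauto. }
  assert (F1r : forall x y, J_inf o y -> ((exists i, (J_inf o i /\ le o i (one o)) /\ (J_inf o y /\ le o y (mul o x i))) <-> le o y x)).
  { intros x y Jy. split.
    - intros [i [[Ji hi] [_ h]]]. apply (le_trans Hl _ _ _ h). rewrite <- (m3 x) at 2.
      apply mul_monor; auto.
    - intro h. rewrite <- (m3 x) in h. destruct (mul_J_r HD Hc Hp _ _ _ Jy h) as [u [Ju [hu h']]].
      eauto. }
  split; [exact P1|].
  unfold is_DInFL_frame.
  split; [intros x [h _]; exact h|].
  split; [intros x y z _ _ [h _]; exact h|].
  split; [intros x h; apply (P1 x h)|].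
  split; [intros x h; apply (P1 x h)|].
  split; [intros x _; apply le_refl; auto|].
  split; [intros x y _ _ h1 h2; apply (le_antisym Hl); auto|].
  split; [intros x y z _ _ _ h1 h2; apply (le_trans Hl _ y); auto|].
  split.
  { intros x y Jx Jy. rewrite (F1l x y Jy), (F1r x y Jy). split; reflexivity. }
  split.
  { intros x y Jx Jy h [_ hx]. split; auto. apply (le_trans Hl _ x); auto. }
  split.
  { intros u v x y _ _ _ Jy h [_ hx]. split; auto. apply (le_trans Hl _ x); auto. }
  split.
  { intros x y z w Jx Jy Jz Jw. split.
    - intros [u [Ju [[_ hu] [_ hw]]]].
      assert (hw' : le o w (mul o x (mul o y z))).
      { rewrite m1. apply (le_trans Hl _ _ _ hw). apply mul_monol; auto. }
      destruct (mul_J_r HD Hc Hp _ _ _ Jw hw') as [v [Jv [hv h']]]. eauto 10.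
    - intros [v [Jv [[_ hv] [_ hw]]]].
      assert (hw' : le o w (mul o (mul o x y) z)).
      { rewrite <- m1. apply (le_trans Hl _ _ _ hw). apply mul_monor; auto. }
      destruct (mul_J_l HD Hc Hp _ _ _ Jw hw') as [u [Ju [hu h']]]. eauto 10. }
  split.
  { intros x y z Jx Jy Jz.
    assert (E1 : le o (tl o (kappa o sup z)) (mul o x y) <-> ~ le o (mul o z x) (mi o y)).
    { rewrite (mi_iff HI), (mi_tl HI), (KC z Jz).
      pose proof (proj1 (R z x (mi o y))) as h. rewrite (tl_mi HI) in h. rewrite h. reflexivity. }
    assert (E2 : le o (mi o (kappa o sup y)) (mul o z x) <-> ~ le o (mul o z x) (mi o y)).
    { rewrite (tl_iff HI), (tl_mi HI), (KC y Jy), (le_mi_tl HI). reflexivity. }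
    split.
    - intros [_ h]. split. apply P1; auto. apply E2, E1, h.
    - intros [_ h]. split. apply P1; auto. apply E1, E2, h. }
  intros x Jx. split.
  - apply (le_mi_tl HI). apply (proj2 (Hc _)). intros a na.
    apply (le_mi_tl HI). apply NNPP. intro c. apply na.
    rewrite (mi_iff HI), (mi_tl HI). apply (KC x Jx). exact c.
  - apply (le_mi_tl HI). apply (proj2 (Hc _)). intros a na.
    apply (le_mi_tl HI). apply NNPP. intro c. apply na.
    rewrite (tl_iff HI), (tl_mi HI). apply (KC x Jx). exact c.
Qed.
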